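(* Let $G$ be a finite group acting transitively on a finite set $X$, fix $x_0\in X$, let $H=G_{x_0}$, and let $K\subset G$ be a regular subgroup. Let $H$ act on $K$ by $h\cdot k=k'$ iff $hk\cdot x_0=k'\cdot x_0$, and let $L^2(K)^H=\{\varphi\colon K\to\mathbb{C}:\varphi(h\cdot k)=\varphi(k)\ \forall h\in H,k\in K\}$. Then $L^2(K)^H$ is a $*$-subalgebra of $L^2(K)$ (with convolution $(\varphi_1*\varphi_2)(k)=\sum_{k'\in K}\varphi_1(k')\varphi_2(k'^{-1}k)$ and involution $\varphi^*(k)=\overline{\varphi(k^{-1})}$), and the map $A\mapsto \tilde\varphi_A$, $\tilde\varphi_A(k)=A_{x_0,k\cdot x_0}$ ($k\in K$), is a $*$-algebra isomorphism from $\mathscr{A}$ onto $L^2(K)^H$.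
   Context: $\mathscr{A}$ denotes the $*$-algebra (under matrix multiplication and conjugate transpose) of complex $X\times X$ matrices $M$ with $M_{g\cdot x,g\cdot y}=M_{x,y}$ for all $g\in G$, $x,y\in X$. A subgroup $K\subset G$ is regular if it acts transitively on $X$ with trivial point stabilizers. *)

(* Defs.v *)
From HB Require Import structures.
From mathcomp Require Import all_boot all_order all_algebra all_fingroup all_field.
Set Implicit Arguments. Unset Strict Implicit. Unset Printing Implicit Defensive.
Import GRing.Theory Num.Theory.
Local Open Scope ring_scope.

Section Defs.
Variables (C : numClosedFieldType) (gT : finGroupType) (T : finType) (to : {action gT &-> T}).

(* MathComp actions are right actions (x ^ g); the paper's left action is
   g . x := to x g^-1. *)
Definition lact (g : gT) (x : T) : T := to x g^-1%g.

Definition mxX := T -> T -> C.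
Definition mxX_mul (A B : mxX) : mxX := fun x y => \sum_(z : T) A x z * B z y.
Definition mxX_add (A B : mxX) : mxX := fun x y => A x y + B x y.
Definition mxX_scale (c : C) (A : mxX) : mxX := fun x y => c * A x y.
Definition mxX_adj (A : mxX) : mxX := fun x y => (A y x)^*.
Definition mxX_one : mxX := fun x y => (x == y)%:R.

Definition in_scrA (G : {group gT}) (A : mxX) : Prop :=
  forall g x y, g \in G -> A (lact g x) (lact g y) = A x y.

Definition conv (K : {group gT}) (f1 f2 : subg_of K -> C) : subg_of K -> C :=
  fun k => \sum_(k' : subg_of K) f1 k' * f2 (k'^-1 * k)%g.
Definition fstar (K : {group gT}) (f : subg_of K -> C) : subg_of K -> C :=
  fun k => (f (k^-1)%g)^*.
Definition fdelta1 (K : {group gT}) : subg_of K -> C :=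
  fun k => (k == 1%g)%:R.

Definition in_L2KH (G K : {group gT}) (x0 : T) (f : subg_of K -> C) : Prop :=
  forall (h : gT) (k k' : subg_of K), (h \in 'C_G[x0 | to])%g ->
    lact (h * sgval k)%g x0 = lact (sgval k') x0 -> f k' = f k.

Definition phiA (K : {group gT}) (x0 : T) (A : mxX) : subg_of K -> C :=
  fun k => A x0 (lact (sgval k) x0).

End Defs.

Arguments in_L2KH {C gT T} to G K x0 f.
Arguments phiA {C gT T} to K x0 A k.
Arguments fdelta1 {C gT} K k.
Arguments in_scrA {C gT T} to G A.

(* Main.v *)
Require Import Defs.
From HB Require Import structures.
From mathcomp Require Import all_boot all_order all_algebra all_fingroup all_field.
Import GRing.Theory Num.Theory.
Local Open Scope ring_scope.


Section H.
Local Set Implicit Arguments. Local Unset Strict Implicit.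
Variables (C : numClosedFieldType) (gT : finGroupType) (T : finType) (to : {action gT &-> T}).
Variables (G K : {group gT}) (x0 : T).
Hypothesis HKG : K \subset G.
Hypothesis HKtr : [transitive K, on [set: T] | to].
Hypothesis HKfree : forall x : T, ('C_K[x | to] = 1)%g.

Lemma lactM g h x : lact to (g * h)%g x = lact to g (lact to h x).
Proof. by rewrite /lact invMg actM. Qed.
Lemma lact1 x : lact to 1%g x = x.
Proof. by rewrite /lact invg1 act1. Qed.
Lemma lactVK g x : lact to g^-1%g (lact to g x) = x.
Proof. by rewrite -lactM mulVg lact1. Qed.
Lemma lactKV g x : lact to g (lact to g^-1%g x) = x.
Proof. by rewrite -lactM mulgV lact1. Qed.
Lemma lact_inj g : injective (lact to g).
Proof. exact: can_inj (lactVK g). Qed.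

Definition e (k : subg_of K) : T := lact to (sgval k) x0.

Lemma e_inj : injective e.
Proof.
move=> k1 k2; rewrite /e => E.
have : ((sgval k1)^-1 * sgval k2)%g \in ('C_K[x0 | to])%g.
  rewrite inE groupM ?groupV ?subgP //; apply/astab1P.
  by move: E; rewrite /lact actM => ->; rewrite actKV.
rewrite HKfree inE => /eqP h.
apply: subg_inj; apply/eqP; rewrite eq_mulVg1; apply/eqP; exact: h.
Qed.

Lemma e_surj y : exists k, e k = y.
Proof.
have : y \in orbit to K x0 by rewrite (atransP HKtr) ?inE.
case/orbitP=> a aK <-; exists (subg K a^-1); rewrite /e subgK ?groupV //.
by rewrite /lact invgK.
Qed.

Definition kk (y : T) : subg_of K := odflt 1%g [pick k | e k == y].

Lemma ekk y : e (kk y) = y.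
Proof.
rewrite /kk; case: pickP => [k /eqP //|H0].
by case: (e_surj y) => k ek; move: (H0 k); rewrite ek eqxx.
Qed.
Lemma kke k : kk (e k) = k.
Proof. by apply: e_inj; rewrite ekk. Qed.

Lemma e1 : e 1%g = x0.
Proof. exact: lact1. Qed.

Lemma sgG (k : subg_of K) : sgval k \in G.
Proof. exact: (subsetP HKG _ (subgP k)). Qed.

Lemma stab_fix h : h \in ('C_G[x0 | to])%g -> lact to h x0 = x0.
Proof.
rewrite inE => /andP[_ /astab1P hx].
by rewrite /lact -{1}hx actK.
Qed.

Lemma stab_in h : h \in ('C_G[x0 | to])%g -> h \in G.
Proof. by rewrite inE => /andP[]. Qed.

Lemma in_L2KH_ext (f f' : subg_of K -> C) :
  (forall k, f k = f' k) -> in_L2KH to G K x0 f -> in_L2KH to G K x0 f'.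
Proof. by move=> E H h k k' hH hk; rewrite -!E; apply: H hk. Qed.

Lemma phiA_L2 (A : mxX C T) : in_scrA to G A -> in_L2KH to G K x0 (phiA to K x0 A).
Proof.
move=> HA h k k' hH; rewrite /phiA lactM => <-.
by rewrite -{1}(stab_fix hH) HA // stab_in.
Qed.

Lemma inv_sg (k : subg_of K) : (sgval k)^-1%g \in G.
Proof. by rewrite groupV sgG. Qed.

Lemma phiA_mul (A B : mxX C T) : in_scrA to G A -> in_scrA to G B -> forall k,
  phiA to K x0 (mxX_mul A B) k = conv (phiA to K x0 A) (phiA to K x0 B) k.
Proof.
move=> HA HB k; rewrite /phiA /mxX_mul /conv.
rewrite (reindex e); last by exists kk => y _; [exact: kke | exact: ekk].
apply: eq_bigr => k' _; congr (_ * _).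
rewrite -(HB (sgval k')^-1%g) ?inv_sg //.
by rewrite /e lactVK -lactM.
Qed.

Lemma phiA_adj (A : mxX C T) : in_scrA to G A -> forall k,
  phiA to K x0 (mxX_adj A) k = fstar (phiA to K x0 A) k.
Proof.
move=> HA k; rewrite /phiA /mxX_adj /fstar.
by rewrite -(HA (sgval k)^-1%g) ?inv_sg // lactVK.
Qed.

Lemma phiA_one k : phiA to K x0 (@mxX_one C T) k = @fdelta1 C gT K k.
Proof.
rewrite /phiA /mxX_one /fdelta1; congr (_%:R).
case: eqP => [h|h]; case: eqP => [h'|h'] //.
  by case: h'; apply: e_inj; rewrite e1.
by case: h; rewrite h' -[_ _ x0]/(e 1) e1.
Qed.

Lemma scrA_phi (A : mxX C T) : in_scrA to G A -> forall x y,
  A x y = phiA to K x0 A (kk (lact to (sgval (kk x))^-1%g y)).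
Proof.
move=> HA x y; rewrite /phiA -[lact _ (sgval (kk _)) x0]/(e _) ekk.
rewrite -(HA (sgval (kk x))^-1%g) ?inv_sg //.
have -> : lact to (sgval (kk x))^-1%g x = x0.
  by rewrite -{2}(ekk x) /e lactVK.
by [].
Qed.

Lemma scrA_mul (A B : mxX C T) : in_scrA to G A -> in_scrA to G B -> in_scrA to G (mxX_mul A B).
Proof.
move=> HA HB g x y gG; rewrite /mxX_mul.
rewrite (reindex (lact to g)); last by exists (lact to g^-1%g) => z _; [exact: lactVK | exact: lactKV].
by apply: eq_bigr => z _; rewrite HA // HB.
Qed.

Lemma scrA_adj (A : mxX C T) : in_scrA to G A -> in_scrA to G (mxX_adj A).
Proof. by move=> HA g x y gG; rewrite /mxX_adj HA. Qed.

Lemma scrA_one : in_scrA to G (@mxX_one C T).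
Proof. by move=> g x y gG; rewrite /mxX_one (inj_eq (@lact_inj g)). Qed.

Lemma surj (f : subg_of K -> C) : in_L2KH to G K x0 f ->
  exists2 A, in_scrA to G A & forall k, phiA to K x0 A k = f k.
Proof.
move=> Hf; exists (fun x y => f ((kk x)^-1 * kk y)%g).
  move=> g x y gG.
  set a := kk x; set b := kk y; set a' := kk (lact to g x); set b' := kk (lact to g y).
  pose h := ((sgval a')^-1 * g * sgval a)%g.
  have hH : h \in ('C_G[x0 | to])%g.
    rewrite inE; apply/andP; split; first by rewrite !groupM ?groupV ?sgG.
    apply/astab1P.
    have E : lact to h x0 = x0.
      rewrite /h !lactM -[lact _ (sgval a) x0]/(e a) ekk.
      by rewrite -(ekk (lact to g x)) -/a' /e lactVK.
    by rewrite -{1}E /lact actKV.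
  apply: (Hf h) => //.
  have -> : sgval (a^-1 * b)%g = ((sgval a)^-1 * sgval b)%g by [].
  rewrite /h !mulgA mulgK !lactM -[lact to (sgval b) x0]/(e b) ekk.
  rewrite -[lact to (sgval b') x0]/(e b') ekk.
  by rewrite -(ekk (lact to g y)) -/b' /e.
move=> k; rewrite /phiA -[lact _ _ x0]/(e k) kke.
suff -> : kk x0 = 1%g by rewrite invg1 mul1g.
by apply: e_inj; rewrite ekk e1.
Qed.

End H.

Theorem theorem3p11 (C : numClosedFieldType) (gT : finGroupType) (T : finType) (to : {action gT &-> T})
    (G K : {group gT}) (x0 : T)
    (HGtr : [transitive G, on [set: T] | to])
    (HKG : K \subset G)
    (HKtr : [transitive K, on [set: T] | to])
    (HKfree : forall x : T, ('C_K[x | to] = 1)%g) :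
  (* L^2(K)^H is a unital *-subalgebra of L^2(K) *)
  (in_L2KH to G K x0 (fun _ => 0 : C)
   /\ (forall f1 f2 : subg_of K -> C, in_L2KH to G K x0 f1 -> in_L2KH to G K x0 f2 ->
        in_L2KH to G K x0 (fun k => f1 k + f2 k))
   /\ (forall (c : C) (f : subg_of K -> C), in_L2KH to G K x0 f -> in_L2KH to G K x0 (fun k => c * f k))
   /\ (forall f1 f2 : subg_of K -> C, in_L2KH to G K x0 f1 -> in_L2KH to G K x0 f2 ->
        in_L2KH to G K x0 (conv f1 f2))
   /\ (forall f : subg_of K -> C, in_L2KH to G K x0 f -> in_L2KH to G K x0 (fstar f))
   /\ in_L2KH to G K x0 (@fdelta1 C gT K)) /\
  (* A |-> phi~_A maps scrA into L^2(K)^H and is a *-algebra isomorphism onto it *)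
  ((forall A : mxX C T, in_scrA to G A -> in_L2KH to G K x0 (phiA to K x0 A))
   /\ (forall A B : mxX C T, in_scrA to G A -> in_scrA to G B -> forall k,
        phiA to K x0 (mxX_add A B) k = phiA to K x0 A k + phiA to K x0 B k)
   /\ (forall (c : C) (A : mxX C T), in_scrA to G A -> forall k,
        phiA to K x0 (mxX_scale c A) k = c * phiA to K x0 A k)
   /\ (forall A B : mxX C T, in_scrA to G A -> in_scrA to G B -> forall k,
        phiA to K x0 (mxX_mul A B) k = conv (phiA to K x0 A) (phiA to K x0 B) k)
   /\ (forall A : mxX C T, in_scrA to G A -> forall k,
        phiA to K x0 (mxX_adj A) k = fstar (phiA to K x0 A) k)
   /\ (forall k, phiA to K x0 (@mxX_one C T) k = @fdelta1 C gT K k)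
   /\ (forall A B : mxX C T, in_scrA to G A -> in_scrA to G B ->
        (forall k, phiA to K x0 A k = phiA to K x0 B k) -> forall x y, A x y = B x y)
   /\ (forall f : subg_of K -> C, in_L2KH to G K x0 f ->
        exists2 A, in_scrA to G A & forall k, phiA to K x0 A k = f k)).
Proof.
have Hsurj := surj HKG HKtr HKfree.
have Hphi : forall A, in_scrA to G A -> in_L2KH to G K x0 (phiA to K x0 A).
  by move=> A; apply: phiA_L2.
have Hmul : forall A B : mxX C T, in_scrA to G A -> in_scrA to G B -> forall k,
        phiA to K x0 (mxX_mul A B) k = conv (phiA to K x0 A) (phiA to K x0 B) k.
  by move=> A B HA HB k; apply: (phiA_mul x0 HKG HKtr HKfree HA HB).
have Hadj : forall A : mxX C T, in_scrA to G A -> forall k,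
        phiA to K x0 (mxX_adj A) k = fstar (phiA to K x0 A) k.
  by move=> A HA k; apply: (phiA_adj x0 HKG HA).
have Hone : forall k, phiA to K x0 (@mxX_one C T) k = @fdelta1 C gT K k.
  by move=> k; apply: (phiA_one C x0 HKfree).
split; [split; [|split; [|split; [|split; [|split]]]]|split; [|split; [|split; [|split; [|split; [|split; [|split]]]]]]].
- by move=> h k k' _ _.
- by move=> f1 f2 H1 H2 h k k' hH hk; rewrite (H1 h k k') // (H2 h k k').
- by move=> c f H1 h k k' hH hk; rewrite (H1 h k k').
- move=> f1 f2 /Hsurj[A1 HA1 E1] /Hsurj[A2 HA2 E2].
  apply: (@in_L2KH_ext _ _ _ _ _ _ _ (phiA to K x0 (mxX_mul A1 A2))).
    move=> k; rewrite Hmul //; apply: eq_bigr => k' _; by rewrite E1 E2.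
  by apply: Hphi; apply: scrA_mul.
- move=> f /Hsurj[A HA E].
  apply: (@in_L2KH_ext _ _ _ _ _ _ _ (phiA to K x0 (mxX_adj A))).
    by move=> k; rewrite Hadj // /fstar E.
  by apply: Hphi; apply: scrA_adj.
- apply: (@in_L2KH_ext _ _ _ _ _ _ _ (phiA to K x0 (@mxX_one C T))) => //.
  by apply: Hphi; apply: scrA_one.
- exact: Hphi.
- by [].
- by [].
- exact: Hmul.
- exact: Hadj.
- exact: Hone.
- move=> A B HA HB E x y.
  by rewrite (scrA_phi x0 HKG HKtr HA) (scrA_phi x0 HKG HKtr HB) E.
- exact: Hsurj.
Qed.
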